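(* Let $W$ be a real vector space and $w_1,w_2,w_3,w_4\in W$. For $t\in[0,1]$ put $w_1(t)=(1-t)w_1+tw_2$, $w_2(t)=(1-t)w_2+tw_3$, $w_3(t)=(1-t)w_3+tw_1$, $w_4(t)=w_4$. Then $\operatorname{rank}(w_i)_{i=1}^4\ge 2$ if and only if $\operatorname{rank}(w_i(t))_{i=1}^4\ge 2$ for all $0\le t\le 1$.
   Context: The rank of a finite sequence of vectors is the dimension of the linear subspace they span. *)

(* Defs.v *)
From mathcomp Require Import all_boot all_order all_algebra.
From mathcomp Require Import boolp reals.
Set Implicit Arguments. Unset Strict Implicit. Unset Printing Implicit Defensive.
Import Order.TTheory GRing.Theory Num.Theory.
Local Open Scope ring_scope.

Section Rank.
Variables (R : pzRingType) (W : lmodType R).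

Definition in_span (s : seq W) (v : W) : Prop :=
  exists c : 'I_(size s) -> R, v = \sum_(i < size s) c i *: s`_i.

Definition lin_indep (v : seq W) : Prop :=
  forall c : 'I_(size v) -> R,
    \sum_(i < size v) c i *: v`_i = 0 -> forall i, c i = 0.

Definition span_has_indep (s : seq W) (k : nat) : Prop :=
  exists v : seq W, [/\ size v = k, lin_indep v & forall x, x \in v -> in_span s x].

(* rank of a finite sequence of vectors = dimension of the subspace they span,
   i.e. the maximal size of a linearly independent family in that span
   (this is at most size s). *)
Definition rank (s : seq W) : nat :=
  \max_(k < (size s).+1 | `[< span_has_indep s k >]) k.

End Rank.

(* Main.v *)
Require Import Defs.
From mathcomp Require Import all_boot all_order all_algebra.
From mathcomp Require Import boolp reals.
From mathcomp Require Import lra ring.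
Import Order.TTheory GRing.Theory Num.Theory.
Local Open Scope ring_scope.

Section H.
Variables (R : pzRingType) (W : lmodType R).

Lemma in_span_trans (s s' : seq W) x :
  (forall y, y \in s -> in_span s' y) -> in_span s x -> in_span s' x.
Proof.
move=> Hs [c ->].
have: forall i : 'I_(size s), exists d : 'I_(size s') -> R,
   s`_i = \sum_(j < size s') d j *: s'`_j.
  by move=> i; apply: Hs; apply: mem_nth.
case/choice => d Hd.
exists (fun j => \sum_(i < size s) c i * d i j).
under eq_bigr do rewrite Hd scaler_sumr.
rewrite exchange_big /=; apply: eq_bigr => j _.
by rewrite scaler_suml; apply: eq_bigr => i _; rewrite scalerA.
Qed.

Lemma rank_le (s s' : seq W) : size s = size s' ->
  (forall x, x \in s -> in_span s' x) -> (rank s <= rank s')%N.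
Proof.
move=> Hs Hsub; apply/bigmax_leqP => k /asboolP [v [Hv Hi Hin]].
have Hk : (k < (size s').+1)%N by rewrite -Hs ltn_ord.
have := @leq_bigmax_cond _ (fun i : 'I_(size s').+1 => `[< span_has_indep s' i >])
   (fun i => nat_of_ord i) (Ordinal Hk).
apply => /=; apply/asboolP; exists v; split => // x /Hin.
exact: in_span_trans.
Qed.

Lemma in_span4 (x1 x2 x3 x4 v : W) c1 c2 c3 c4 :
  v = c1*:x1+c2*:x2+c3*:x3+c4*:x4 -> in_span [::x1;x2;x3;x4] v.
Proof.
move=> ->; exists (fun i : 'I_4 => [:: c1;c2;c3;c4]`_i).
by rewrite !big_ord_recl big_ord0 /= addr0 !addrA.
Qed.
Lemma distr3 (c p q r : R) (U V Z : W) :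
  c *: (p *: U - q *: V + r *: Z) = (c * p) *: U + (- (c * q)) *: V + (c * r) *: Z.
Proof. by rewrite !scalerDr scalerN scaleNr !scalerA. Qed.
Lemma rot3 (x y z : W) : x + y + z = y + z + x.
Proof. by rewrite -addrA addrC. Qed.
End H.

Theorem lemma2p3 (R : realType) (W : lmodType R) (w1 w2 w3 w4 : W) :
  leq 2 (rank [:: w1; w2; w3; w4]) <->
  (forall t : R, 0 <= t <= 1 ->
     leq 2 (rank [:: (1 - t) *: w1 + t *: w2; (1 - t) *: w2 + t *: w3;
                     (1 - t) *: w3 + t *: w1; w4])).
Proof.
split; last first.
  move=> /(_ 0); rewrite ler01 lexx subr0 !scale1r !scale0r !addr0.
  by apply.
move=> H2 t /andP[t0 t1]; apply: (leq_trans H2); apply: rank_le => //.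
set a := 1 - t.
set D := a^+3 + t^+3.
have D0 : D != 0.
  rewrite /D /a; apply/lt0r_neq0.
  have -> : (1 - t) ^+ 3 + t ^+ 3 = 3%:R * (t - 2%:R^-1)^+2 + 4%:R^-1.
    by rewrite !exprS expr0; field.
  apply: ltr_wpDl; last by rewrite invr_gt0 ltr0n.
  by rewrite mulr_ge0 ?ler0n ?sqr_ge0.
set u1 := a *: w1 + t *: w2; set u2 := a *: w2 + t *: w3; set u3 := a *: w3 + t *: w1.
have key : forall x y z : W, D^-1 *: (a^+2 *: (a *: x + t *: y) - (a*t) *: (a *: y + t *: z)
     + t^+2 *: (a *: z + t *: x)) = x.
  move=> x y z.
  set I := (X in D^-1 *: X).
  suff -> : I = D *: x by rewrite scalerA mulVf // scale1r.
  rewrite /I.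
  rewrite !scalerDr !scalerA opprD !addrA.
  have -> : a * t * a = a^+2 * t by rewrite mulrAC.
  have -> : a * t * t = t^+2 * a by rewrite -mulrA mulrC.
  rewrite addrK subrK -scalerDl.
  by rewrite /D -!exprSr.
have key2 : forall x y z : W, x = (D^-1 * a^+2) *: (a *: x + t *: y)
   + (- (D^-1 * (a*t))) *: (a *: y + t *: z) + (D^-1 * t^+2) *: (a *: z + t *: x).
  move=> x y z.
  apply: (etrans (esym (key x y z))).
  by rewrite distr3.
move=> x; rewrite !inE => /or4P [] /eqP ->.
- apply: (@in_span4 _ _ _ _ _ _ _ (D^-1 * a^+2) (- (D^-1 * (a*t))) (D^-1 * t^+2) 0).
  by rewrite scale0r addr0; apply: key2.
- apply: (@in_span4 _ _ _ _ _ _ _ (D^-1 * t^+2) (D^-1 * a^+2) (- (D^-1 * (a*t))) 0).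
  rewrite scale0r addr0; apply: etrans (key2 w2 w3 w1) _.
  by rewrite [RHS]rot3.
- apply: (@in_span4 _ _ _ _ _ _ _ (- (D^-1 * (a*t))) (D^-1 * t^+2) (D^-1 * a^+2) 0).
  rewrite scale0r addr0; apply: etrans (key2 w3 w1 w2) _.
  by rewrite [LHS]rot3.
- apply: (@in_span4 _ _ _ _ _ _ _ 0 0 0 1).
  by rewrite !scale0r scale1r !add0r.
Qed.
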